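(* Let $m,n\ge1$. The set of monomials \[\Big\{\prod_{i,j}\eta_{ij}^{a_{ij}}\xi_{ij}^{b_{ij}}\ \Big|\ \text{for every } i:\ \big(\exists j \text{ with } a_{ij}>0 \text{ or } b_{ij}>0\big)\Rightarrow\big(a_{ik}>0\text{ for all }k\big)\Big\}\] (with $a_{ij},b_{ij}\in\mathbb{N}$) is an $\mathbb{R}$-basis of $R^m_n$.
   Context: $\eta_{ij},\xi_{ij}$ ($1\le i\le m$, $1\le j\le n$) are independent variables. $R^m_n$ is the set of polynomials $f\in\mathbb{R}[\eta_{ij},\xi_{ij}]$ such that for every $i\in\{1,\dots,m\}$ and every $k\in\{1,\dots,n\}$, the polynomial obtained from $f$ by substituting $\eta_{ik}=0$ does not depend on any of the variables $\xi_{ij}$ ($1\le j\le n$) or $\eta_{ij}$ ($j\ne k$). $R^m_n$ is a subring (in particular an $\mathbb{R}$-subspace) of the polynomial ring. *)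

(* Defs.v *)
(* Polynomials in the 2mn variables eta_ij, xi_ij are
   represented as finitely supported coefficient functions on monomials. *)
From HB Require Import structures.
From mathcomp Require Import all_boot all_order all_algebra.
Set Implicit Arguments. Unset Strict Implicit. Unset Printing Implicit Defensive.
Import Order.TTheory GRing.Theory Num.Theory.
Local Open Scope ring_scope.

(* variables: inl (i,j) = eta_ij, inr (i,j) = xi_ij *)
Definition var (m n : nat) : Type := (('I_m * 'I_n) + ('I_m * 'I_n))%type.

(* a monomial prod eta_ij^(a ij) xi_ij^(b ij) is the pair (a, b) *)
Definition mono (m n : nat) : Type :=
  ({ffun 'I_m * 'I_n -> nat} * {ffun 'I_m * 'I_n -> nat})%type.

Definition expo m n (u : mono m n) (v : var m n) : nat :=
  match v with inl p => u.1 p | inr p => u.2 p end.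

Definition finsupp (R : realFieldType) m n (f : mono m n -> R) : Prop :=
  exists s : seq (mono m n), forall u, f u != 0 -> u \in s.

Definition subst_eta0 (R : realFieldType) m n (i : 'I_m) (k : 'I_n)
  (f : mono m n -> R) : mono m n -> R :=
  fun u => if u.1 (i, k) == 0%N then f u else 0.

Definition depends_on (R : realFieldType) m n (f : mono m n -> R) (v : var m n) : Prop :=
  exists u, f u != 0 /\ (0 < expo u v)%N.

Definition inRmn (R : realFieldType) m n (f : mono m n -> R) : Prop :=
  finsupp f /\
  forall (i : 'I_m) (k : 'I_n),
    (forall j : 'I_n, ~ depends_on (subst_eta0 i k f) (inr (i, j))) /\
    (forall j : 'I_n, j != k -> ~ depends_on (subst_eta0 i k f) (inl (i, j))).

Definition monomial (R : realFieldType) m n (u : mono m n) : mono m n -> R :=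
  fun x => (x == u)%:R.

Definition lincomb (R : realFieldType) m n (s : seq (mono m n)) (c : mono m n -> R)
  : mono m n -> R :=
  fun x => \sum_(u <- s) c u * monomial R u x.

Definition inB m n (u : mono m n) : Prop :=
  forall i : 'I_m,
    (exists j : 'I_n, (0 < u.1 (i, j))%N \/ (0 < u.2 (i, j))%N) ->
    forall k : 'I_n, (0 < u.1 (i, k))%N.

Definition is_basis_Rmn (R : realFieldType) m n (B : mono m n -> Prop) : Prop :=
  (forall u, B u -> inRmn (monomial R u)) /\
  (forall (s : seq (mono m n)) (c : mono m n -> R),
      uniq s -> (forall u, u \in s -> B u) ->
      (forall x, lincomb s c x = 0) -> forall u, u \in s -> c u = 0) /\
  (forall f : mono m n -> R, inRmn f ->
      exists (s : seq (mono m n)) (c : mono m n -> R),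
        uniq s /\ (forall u, u \in s -> B u) /\ forall x, f x = lincomb s c x).

(* Main.v *)
Require Import Defs.
From HB Require Import structures.
From mathcomp Require Import all_boot all_order all_algebra.
Set Implicit Arguments. Unset Strict Implicit. Unset Printing Implicit Defensive.
Import Order.TTheory GRing.Theory Num.Theory.
Local Open Scope ring_scope.

Lemma inRmn_of (R : realFieldType) m n (f : mono m n -> R) :
  finsupp f -> (forall u, f u != 0 -> inB u) -> inRmn f.
Proof.
move=> hf hB; split=> // i k; split.
- move=> j [u [hu hexp]]; move: hu; rewrite /subst_eta0.
  case: ifP => [/eqP h0 hu|_]; last by rewrite eqxx.
  have := hB u hu i (ex_intro _ j (or_intror hexp)) k.
  by rewrite h0.
- move=> j _ [u [hu hexp]]; move: hu; rewrite /subst_eta0.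
  case: ifP => [/eqP h0 hu|_]; last by rewrite eqxx.
  have := hB u hu i (ex_intro _ j (or_introl hexp)) k.
  by rewrite h0.
Qed.

Lemma inRmn_B (R : realFieldType) m n (f : mono m n -> R) u :
  inRmn f -> f u != 0 -> inB u.
Proof.
move=> [_ hf] hu i [j Hj] k.
rewrite lt0n; apply/negP => /eqP h0.
have [h1 h2] := hf i k.
have hs : subst_eta0 i k f u != 0 by rewrite /subst_eta0 h0 eqxx.
case: Hj => Hj.
- case: (eqVneq j k) => [ejk|njk].
  + by move: Hj; rewrite ejk h0.
  + by apply: (h2 j njk); exists u; split.
- by apply: (h1 j); exists u; split.
Qed.

Lemma lincombE (R : realFieldType) m n (s : seq (mono m n)) (c : mono m n -> R) x :
  uniq s -> @lincomb R m n s c x = if x \in s then c x else 0.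
Proof.
rewrite /lincomb /monomial; elim: s => [|a s IH] /=; first by rewrite big_nil.
move=> /andP [ha us]; rewrite big_cons IH // in_cons.
case: (eqVneq x a) => [->|nxa] /=.
- by rewrite (negbTE ha) mulr1 addr0.
- by rewrite mulr0 add0r.
Qed.

Theorem proposition2p6 (R : realFieldType) (m n : nat) (hm : (0 < m)%N) (hn : (0 < n)%N) :
  is_basis_Rmn R (@inB m n).
Proof.
split; [|split].
- move=> u hu; apply: inRmn_of.
  + exists [:: u] => x; rewrite /monomial mem_seq1; by case: (x == u); rewrite /= ?eqxx.
  + move=> x; rewrite /monomial; case: (eqVneq x u) => [-> _|_] //; by rewrite /= eqxx.
- move=> s c us _ h u hu.
  by have := h u; rewrite lincombE // hu.
- move=> f hf; have [s hs] := hf.1.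
  exists (undup [seq u <- s | f u != 0]), f; split; first exact: undup_uniq.
  split.
  + move=> u; rewrite mem_undup mem_filter => /andP [hu _].
    exact: (inRmn_B hf hu).
  + move=> x; rewrite lincombE ?undup_uniq // mem_undup mem_filter.
    case: (eqVneq (f x) 0) => [->|hx] //=.
    by rewrite (hs x hx).
Qed.
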